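(* Let $b_n=\max\{\alpha_1(\lambda)\colon \lambda\in P(n)\}$, where $\alpha_1(\lambda)$ is the number of distinct parts of $\lambda$. Then, as formal power series in $q$, \[ \sum_{n\geq 0} b_n q^n=\frac{1}{1-q}\left(\frac{(q^2;q^2)^2_{\infty}}{(q;q)_{\infty}}-1\right). \]
   Context: $P(n)$ is the set of partitions of $n$ (with $P(0)$ containing only the empty partition). Equivalently, $\alpha_1(\lambda)$ is the number of cells of the Young diagram of $\lambda$ with hook length $1$. The notation $(a;q)_\infty=\prod_{i\geq 0}(1-aq^i)$, so $(q;q)_\infty=(1-q)(1-q^2)(1-q^3)\cdots$ and $(q^2;q^2)_\infty=(1-q^2)(1-q^4)(1-q^6)\cdots$. *)

(* Defs.v *)
From HB Require Import structures.
From mathcomp Require Import all_boot all_order all_algebra.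
From mathcomp Require Import boolp.
From mathcomp Require Import zify.

Set Implicit Arguments.
Unset Strict Implicit.
Unset Printing Implicit Defensive.

Import GRing.Theory.

Definition is_partition (n : nat) (s : seq nat) : bool :=
  [&& sorted geq s, all (fun x => 0 < x) s & sumn s == n].

(* alpha_1(lambda) = number of distinct parts of lambda
   (= number of cells of hook length 1). *)
Definition alpha1 (s : seq nat) : nat := size (undup s).

Definition attained (n k : nat) : bool :=
  `[< exists s, is_partition n s /\ alpha1 s = k >].

Lemma attained_ex (n : nat) : exists k, attained n k.
Proof.
exists (alpha1 (nseq n 1)); apply/asboolP; exists (nseq n 1); split => //.
apply/and3P; split.
- by elim: n => //= -[|n] //= ->; rewrite andbT.
- by apply/allP => x /nseqP [-> _].
- by apply/eqP; elim: n => //= n ->.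
Qed.

Lemma alpha1_le (n : nat) (s : seq nat) : is_partition n s -> alpha1 s <= n.
Proof.
case/and3P => _ Hpos /eqP <-.
apply: leq_trans (size_undup s) _.
elim: s Hpos => //= x s IH /andP [Hx Hs].
by have := IH Hs; lia.
Qed.

Lemma attained_bound (n : nat) : forall k, attained n k -> k <= n.
Proof. by move=> k /asboolP [s [Hs <-]]; exact: alpha1_le. Qed.

Definition b (n : nat) : nat := ex_maxn (attained_ex n) (@attained_bound n).

Local Open Scope ring_scope.

Definition fps := nat -> rat.

Definition fps_one : fps := fun n => (n == 0%N)%:R.
Definition fps_sub (f g : fps) : fps := fun n => f n - g n.
Definition fps_mul (f g : fps) : fps :=
  fun n => \sum_(i < n.+1) f i * g (n - i)%N.
Definition fps_of_poly (p : {poly rat}) : fps := fun n => p`_n.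

Fixpoint inv_seq (f : fps) (n : nat) : seq rat :=
  match n with
  | 0 => [:: (f 0%N)^-1]
  | n'.+1 => let s := inv_seq f n' in
      rcons s (- (f 0%N)^-1 * \sum_(i < n) f i.+1 * nth 0 s (n' - i)%N)
  end.

Definition fps_inv (f : fps) : fps := fun n => nth 0 (inv_seq f n) n.

(* (q^m;q^m)_oo = prod_{i>=0} (1 - q^{m(i+1)}), for m >= 1.
   Its n-th coefficient is that of the finite product over the factors
   with i < n+1 (all factors with i >= n contribute only to degrees > n). *)
Definition qpoch_inf (m : nat) : fps :=
  fun n => (\prod_(0 <= i < n.+1) (1 - 'X^(m * i.+1)%N) : {poly rat})`_n.

(* Main.v *)
Require Import Defs.
From HB Require Import structures.
From mathcomp Require Import all_boot all_order all_algebra.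
From mathcomp Require Import boolp zify ring.
Unset Printing Implicit Defensive.
Import GRing.Theory.
Local Open Scope ring_scope.

Definition fa (n : nat) (f : fps) (p : {poly rat}) := forall i, (i <= n)%N -> f i = p`_i.

Lemma fa_mul n f g p r : fa n f p -> fa n g r -> fa n (fps_mul f g) (p * r).
Proof.
move=> hf hg i hi; rewrite /fps_mul coefM; apply: eq_bigr => j _.
rewrite hf ?hg //; last by have := ltn_ord j; lia.
by have := ltn_ord j; lia.
Qed.

Lemma fa_sub n f g p r : fa n f p -> fa n g r -> fa n (fps_sub f g) (p - r).
Proof. by move=> hf hg i hi; rewrite /fps_sub coefB hf ?hg. Qed.

Lemma fa_one n : fa n fps_one 1.
Proof. by move=> i _; rewrite coef1. Qed.

Lemma fa_poly n p : fa n (fps_of_poly p) p.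
Proof. by []. Qed.

Definition tr (f : fps) (m : nat) : {poly rat} := \poly_(i < m) f i.

Lemma fa_tr n f : fa n f (tr f n.+1).
Proof. by move=> i hi; rewrite coef_poly ltnS hi. Qed.

Lemma fa_eq f g : (forall n, exists p, fa n f p /\ fa n g p) -> f = g.
Proof.
move=> h; apply: funext => n; have [p [hf hg]] := h n.
by rewrite hf // hg.
Qed.

Lemma fps_mulC f g : fps_mul f g = fps_mul g f.
Proof.
apply: fa_eq => n; exists (tr f n.+1 * tr g n.+1); split.
  exact: fa_mul (fa_tr _ _) (fa_tr _ _).
by rewrite mulrC; exact: fa_mul (fa_tr _ _) (fa_tr _ _).
Qed.

Lemma fps_mulA f g h : fps_mul f (fps_mul g h) = fps_mul (fps_mul f g) h.
Proof.
apply: fa_eq => n; exists (tr f n.+1 * tr g n.+1 * tr h n.+1); split.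
  rewrite -mulrA; apply: fa_mul (fa_tr _ _) _; exact: fa_mul (fa_tr _ _) (fa_tr _ _).
apply: fa_mul (fa_tr _ _); exact: fa_mul (fa_tr _ _) (fa_tr _ _).
Qed.

Lemma fps_mul1 f : fps_mul f fps_one = f.
Proof.
apply: fa_eq => n; exists (tr f n.+1); split; last exact: fa_tr.
by rewrite -[X in fa _ _ X]mulr1; exact: fa_mul (fa_tr _ _) (fa_one _).
Qed.

Lemma fps_mulBr f g h : fps_mul f (fps_sub g h) = fps_sub (fps_mul f g) (fps_mul f h).
Proof.
apply: fa_eq => n; exists (tr f n.+1 * (tr g n.+1 - tr h n.+1)); split.
  by apply: fa_mul; [exact: fa_tr| apply: fa_sub; exact: fa_tr].
by rewrite mulrBr; apply: fa_sub; apply: fa_mul; exact: fa_tr.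
Qed.

Lemma size_inv_seq f n : size (inv_seq f n) = n.+1.
Proof. by elim: n => //= n IH; rewrite size_rcons IH. Qed.

Lemma nth_inv_seq f n i : (i <= n)%N -> nth 0 (inv_seq f n) i = fps_inv f i.
Proof.
move=> hi; rewrite /fps_inv; elim: n hi => [|n IH] hi.
  by move: hi; rewrite leqn0 => /eqP ->.
rewrite leq_eqVlt in hi; case/orP: hi => [/eqP -> //| hi].
by rewrite /= nth_rcons size_inv_seq hi IH.
Qed.

Lemma fps_invS f n : fps_inv f n.+1 =
  - (f 0%N)^-1 * \sum_(i < n.+1) f i.+1 * fps_inv f (n - i)%N.
Proof.
rewrite {1}/fps_inv /= nth_rcons size_inv_seq ltnn eqxx; congr (_ * _).
apply: eq_bigr => i _; rewrite nth_inv_seq //; lia.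
Qed.

Lemma fps_mulV f : f 0%N != 0 -> fps_mul f (fps_inv f) = fps_one.
Proof.
move=> h0; apply: funext => -[|n].
  rewrite /fps_mul big_ord1 /fps_one /= /fps_inv /= mulfV //.
rewrite /fps_mul big_ord_recl /= subn0 fps_invS mulrA mulrN mulfV // mulN1r.
rewrite /fps_one /=; rewrite addrC; apply/eqP; rewrite subr_eq0; apply/eqP.
by apply: eq_bigr => i _; rewrite subSS.
Qed.

Lemma fps_inv_uniq f g h : f 0%N != 0 -> fps_mul f g = h -> g = fps_mul (fps_inv f) h.
Proof.
move=> h0 <-; rewrite fps_mulA [fps_mul (fps_inv f) f]fps_mulC fps_mulV //.
by rewrite fps_mulC fps_mul1.
Qed.

Set Implicit Arguments. Unset Strict Implicit.

Definition eqm (M : nat) (p r : {poly rat}) := forall i, (i < M)%N -> p`_i = r`_i.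

Lemma eqm_refl M p : eqm M p p. Proof. by []. Qed.
Lemma eqm_sym M p r : eqm M p r -> eqm M r p. Proof. by move=> h i hi; rewrite h. Qed.
Lemma eqm_trans M p r s : eqm M p r -> eqm M r s -> eqm M p s.
Proof. by move=> h1 h2 i hi; rewrite h1 ?h2. Qed.
Lemma eqm_le M M' p r : (M' <= M)%N -> eqm M p r -> eqm M' p r.
Proof. by move=> hM h i hi; apply: h; lia. Qed.

Lemma eqm_mul M p p' r r' : eqm M p p' -> eqm M r r' -> eqm M (p * r) (p' * r').
Proof.
move=> h1 h2 i hi; rewrite !coefM; apply: eq_bigr => j _.
have hj := ltn_ord j; rewrite h1 ?h2 //; lia.
Qed.

Lemma eqm_add M p p' r r' : eqm M p p' -> eqm M r r' -> eqm M (p + r) (p' + r').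
Proof. by move=> h1 h2 i hi; rewrite !coefD h1 ?h2. Qed.

Lemma eqm_sum M (I : Type) (s : seq I) (P : pred I) (F G : I -> {poly rat}) :
  (forall i, P i -> eqm M (F i) (G i)) ->
  eqm M (\sum_(i <- s | P i) F i) (\sum_(i <- s | P i) G i).
Proof.
move=> h k hk; rewrite !coef_sum; apply: eq_bigr => i hi; exact: h.
Qed.

Lemma eqm_prod M (I : Type) (s : seq I) (P : pred I) (F G : I -> {poly rat}) :
  (forall i, P i -> eqm M (F i) (G i)) ->
  eqm M (\prod_(i <- s | P i) F i) (\prod_(i <- s | P i) G i).
Proof.
move=> h; apply: (big_ind2 (eqm M)) => //; first by move=> *; apply: eqm_mul.
Qed.

Lemma eqm_Xn M e p r : eqm (M - e) p r -> eqm M ('X^e * p) ('X^e * r).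
Proof.
move=> h i hi; rewrite !coefXnM; case: ifP => // he; apply: h; lia.
Qed.

Lemma eqm_Xn0 M e p : (M <= e)%N -> eqm M ('X^e * p) 0.
Proof. by move=> h i hi; rewrite coefXnM coef0; case: ifP => //; lia. Qed.

Lemma eqm_1X M k : (M <= k)%N -> eqm M (1 - 'X^k) 1.
Proof.
move=> h i hi; rewrite coefB coefXn; case: eqP => [e|_]; last by rewrite subr0.
lia.
Qed.

Definition pp (m K : nat) : {poly rat} := \prod_(0 <= i < K) (1 - 'X^(m * i.+1)).

Lemma eqm_prod1 M (s : seq nat) (P : pred nat) (F : nat -> nat) :
  (forall i, P i -> (M <= F i)%N) ->
  eqm M (\prod_(i <- s | P i) (1 - 'X^(F i))) 1.
Proof.
move=> h; apply: (big_ind (fun p => eqm M p 1)) => //.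
  by move=> x y hx hy; have := eqm_mul hx hy; rewrite mulr1.
by move=> i /h; exact: eqm_1X.
Qed.

Lemma pp_stable m K K' : (0 < m)%N -> (K <= K')%N -> eqm K (pp m K) (pp m K').
Proof.
move=> hm hK; rewrite /pp (@big_cat_nat _ _ _ K 0 K' _ _ (leq0n K) hK) /=.
rewrite -[X in eqm _ X](mulr1); apply: eqm_mul => //.
apply: eqm_sym; rewrite big_nat_cond; apply: eqm_prod1 => i /andP [/andP [hi _] _]; nia.
Qed.

Fixpoint tri (d : nat) : nat := if d is d'.+1 then (tri d' + d'.+1)%N else 0%N.

Lemma tri_ge d : (d <= tri d)%N.
Proof. by elim: d => //= d IH; lia. Qed.

Lemma tri_mono d d' : (d <= d')%N -> (tri d <= tri d')%N.
Proof. elim: d' => [|d' IH]; first by rewrite leqn0 => /eqP ->.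
by rewrite leq_eqVlt => /orP [/eqP -> //| h]; have := IH h; simpl; lia.
Qed.

Definition psi (K : nat) : {poly rat} := \sum_(0 <= d < K) 'X^(tri d).

Lemma psi_stable K K' : (K <= K')%N -> eqm K (psi K) (psi K').
Proof.
move=> hK; rewrite /psi (@big_cat_nat _ _ _ K 0 K' _ _ (leq0n K) hK) /=.
rewrite -[X in eqm _ X]addr0; apply: eqm_add => //.
apply: eqm_sym => i hi; rewrite coef0 coef_sum big_nat big1 // => d /andP [hd _].
rewrite coefXn; have := tri_ge d; case: eqP => //; lia.
Qed.

Definition qf (a : nat) : {poly rat} := \prod_(0 <= i < a) (1 - 'X^(i.+1)).
Definition R (n a : nat) : {poly rat} := \prod_(0 <= i < a) (1 - 'X^(n - i)).

Fixpoint qbin (n k : nat) {struct n} : {poly rat} :=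
  match k with
  | 0 => 1
  | k'.+1 => match n with
             | 0 => 0
             | n'.+1 => 'X^(n' - k') * qbin n' k' + qbin n' k'.+1
             end
  end.

Lemma qbin_gt n k : (n < k)%N -> qbin n k = 0.
Proof.
elim: n k => [|n IH] [|k] //= h.
rewrite !IH ?mulr0 ?addr0 //; lia.
Qed.

Lemma qbin_n0 n : qbin n 0 = 1. Proof. by case: n. Qed.

Lemma R_zero n a : (n < a)%N -> R n a = 0.
Proof.
move=> h; rewrite /R (@big_cat_nat _ _ _ n 0 a _ _ (leq0n n) (ltnW h)) /=.
by rewrite [X in _ * X = _]big_ltn // subnn expr0 subrr mul0r mulr0.
Qed.

Lemma qf_S a : qf a.+1 = qf a * (1 - 'X^(a.+1)).
Proof. by rewrite /qf big_nat_recr. Qed.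

Lemma R_S n a : R n a.+1 = R n a * (1 - 'X^(n - a)).
Proof. by rewrite /R big_nat_recr. Qed.

Lemma R_SS n a : R n.+1 a.+1 = (1 - 'X^(n.+1)) * R n a.
Proof.
by rewrite /R big_nat_recl //; congr (_ * _).
Qed.

Lemma qf0 a : (qf a)`_0 = 1.
Proof.
rewrite /qf; apply: (big_ind (fun p : {poly rat} => p`_0 = 1)).
- by rewrite coef1.
- by move=> x y hx hy; rewrite coef0M hx hy mulr1.
- by move=> i _; rewrite coefB coef1 coefXn.
Qed.

Lemma qf_neq0 a : qf a != 0.
Proof. by apply/eqP => h; have := qf0 a; rewrite h coef0 => /eqP; rewrite eq_sym oner_eq0. Qed.

Lemma qbin_prod n a : qbin n a * qf a = R n a.
Proof.
elim: n a => [|n IH] [|a].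
- by rewrite /qf /R !big_geq // mulr1.
- by rewrite /= mul0r R_zero.
- by rewrite qbin_n0 /qf /R !big_geq // mulr1.
rewrite /= mulrDl IH qf_S (mulrA _ (qf a)) -(mulrA _ (qbin n a)) IH R_S R_SS.
case: (leqP a n) => h.
  have e : ('X^(n.+1) = 'X^(n - a) * 'X^(a.+1) :> {poly rat}).
    by rewrite -exprD; congr (_ ^+ _); lia.
  rewrite e; ring.
by rewrite R_zero // !(mulr0, mul0r, addr0).
Qed.

Lemma qbinA n k : qbin n.+1 k.+1 = qbin n k + 'X^(k.+1) * qbin n k.+1.
Proof.
apply: (mulIf (qf_neq0 k.+1)).
rewrite qbin_prod mulrDl -mulrA qbin_prod qf_S mulrA qbin_prod R_SS R_S.
case: (leqP k n) => h.
  have e : ('X^(n.+1) = 'X^(k.+1) * 'X^(n - k) :> {poly rat}).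
    by rewrite -exprD; congr (_ ^+ _); lia.
  rewrite e; ring.
by rewrite R_zero // !(mulr0, mul0r, addr0).
Qed.

Lemma qbinB n k : qbin n.+1 k.+1 = 'X^(n - k) * qbin n k + qbin n k.+1.
Proof. by []. Qed.

Lemma R_qf n a : (a <= n)%N -> R n a * qf (n - a) = qf n.
Proof.
elim: a => [|a IH] h; first by rewrite /R big_geq // mul1r subn0.
have e : (n - a = (n - a.+1).+1)%N by lia.
rewrite R_S -mulrA -(IH (ltnW h)) [in RHS]e qf_S -e.
by rewrite [X in _ = _ * X]mulrC.
Qed.

Lemma qbin_full n a : (a <= n)%N -> qbin n a * (qf a * qf (n - a)) = qf n.
Proof. by move=> h; rewrite mulrA qbin_prod R_qf. Qed.

Lemma qbin_sym n a : (a <= n)%N -> qbin n a = qbin n (n - a).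
Proof.
move=> h; apply: (mulIf (mulf_neq0 (qf_neq0 a) (qf_neq0 (n - a)))).
have h2 := qbin_full (leq_subr a n); rewrite subKn // in h2.
by rewrite qbin_full // [qf a * _]mulrC h2.
Qed.

Definition e (N j : nat) : nat := if (N <= j)%N then tri (j - N) else tri (N - j.+1).
Definition c (N j : nat) : {poly rat} := 'X^(e N j) * qbin N.*2 j.
Definition cm (N j : nat) : {poly rat} := if j is j'.+1 then c N j' else 0.

Lemma e_shift N j : (e N j.+1 + N = e N j + j.+1)%N.
Proof.
rewrite /e; case: (leqP N j) => h.
  rewrite leqW //; have -> : (j.+1 - N = (j - N).+1)%N by lia.
  simpl; lia.
rewrite leq_eqVlt in h; case/orP: h => [/eqP <-|h].
  by rewrite leqnn subnn.
rewrite leqNgt h /=.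
have -> : (N - j.+1 = (N - j.+2).+1)%N by lia.
simpl; lia.
Qed.

Lemma e_S N j : e N.+1 j.+1 = e N j.
Proof. by rewrite /e ltnS subSS. Qed.

Lemma e_0 N : (e N.+1 0 = N + e N 0)%N.
Proof. rewrite /e /=; case: N => //= N; rewrite subn1 /=; lia. Qed.

Lemma c_rec N j : (j <= N.*2.+1)%N ->
  c N.+1 j.+1 = 'X^(N.+1) * cm N j + (1 + 'X^(N.*2.+1)) * c N j + 'X^N * c N j.+1.
Proof.
move=> hj; rewrite /c e_S doubleS qbinB qbinA.
have E := e_shift N j.
case: j hj E => [|j] hj E.
  rewrite /= !qbin_n0 !mulr1 mulr0 add0r subn0.
  rewrite (mulrA 'X^N) -exprD [(N + _)%N]addnC E exprD; ring.
have E' := e_shift N j.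
have H1 : 'X^(N.+1) * 'X^(e N j) = 'X^(e N j.+1) * 'X^(N.*2.+1 - j.+1) :> {poly rat}.
  by rewrite -!exprD; congr (_ ^+ _); move: hj E'; rewrite -addnn; lia.
have H2 : 'X^(N.*2.+1) = 'X^(N.*2.+1 - j.+1) * 'X^(j.+1) :> {poly rat}.
  by rewrite -!exprD; congr (_ ^+ _); move: hj; rewrite -addnn; lia.
have H3 : 'X^N * 'X^(e N j.+2) = 'X^(e N j.+1) * ('X^(j.+1) * 'X) :> {poly rat}.
  by rewrite -exprSr -!exprD; congr (_ ^+ _); lia.
rewrite qbinA /cm /c (mulrA 'X^(N.+1)) H1 H2 (mulrA 'X^N) H3 (exprS _ j.+1).
ring.
Qed.

Definition Ssum (N : nat) : {poly rat} := \sum_(0 <= j < N.*2.+1) c N j.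

Lemma c_gt N j : (N.*2 < j)%N -> c N j = 0.
Proof. by move=> h; rewrite /c qbin_gt // mulr0. Qed.

Lemma S_ext N L : (N.*2 < L)%N -> \sum_(0 <= j < L) c N j = Ssum N.
Proof.
move=> h; rewrite (@big_cat_nat _ _ _ N.*2.+1 0 L _ _ (leq0n _) h) /=.
rewrite [X in _ + X]big_nat_cond [X in _ + X]big1 ?addr0 // => j /andP [/andP [hj _] _].
exact: c_gt.
Qed.

Lemma S_rec N : Ssum N.+1 = (1 + 'X^N) * (1 + 'X^(N.+1)) * Ssum N.
Proof.
rewrite /Ssum doubleS big_nat_recl //.
rewrite (@eq_big_nat _ _ _ 0 N.*2.+2 _ (fun j => 'X^(N.+1) * cm N j +
   (1 + 'X^(N.*2.+1)) * c N j + 'X^N * c N j.+1)); last first.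
  by move=> j /andP [_ hj]; apply: c_rec.
have sp : forall (F G H : nat -> {poly rat}) n,
  \sum_(0 <= i < n) (F i + G i + H i) =
  \sum_(0 <= i < n) F i + \sum_(0 <= i < n) G i + \sum_(0 <= i < n) H i.
  by move=> F G H n; rewrite !big_split.
rewrite sp -!mulr_sumr.
have h1 : \sum_(0 <= j < N.*2.+2) cm N j = Ssum N by rewrite big_nat_recl // add0r.
have h2 : \sum_(0 <= j < N.*2.+2) c N j = Ssum N by apply: S_ext.
have h3 : \sum_(0 <= j < N.*2.+2) c N j.+1 = Ssum N - c N 0.
  have hl : (N.*2 < N.*2.+3)%N by lia.
  by rewrite -(S_ext hl) [in RHS]big_nat_recl // addrC addKr.
have h4 : c N.+1 0 = 'X^N * c N 0.
  by rewrite /c !qbin_n0 !mulr1 e_0 exprD.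
have h5 : 'X^(N.*2.+1) = 'X^N * 'X^(N.+1) :> {poly rat}.
  by rewrite -exprD -addnn addnS.
rewrite h1 h2 h3 h4 h5 -/(Ssum N); ring.
Qed.

Lemma S_closed N : Ssum N = \prod_(0 <= i < N) ((1 + 'X^i) * (1 + 'X^(i.+1))).
Proof.
elim: N => [|N IH].
  by rewrite /Ssum big_nat1 big_geq // /c qbin_n0 /e /= expr0 mulr1.
by rewrite S_rec IH big_nat_recr //= mulrC.
Qed.

Lemma qf_pp a : pp 1 a = qf a.
Proof. by rewrite /pp /qf; apply: eq_bigr => i _; rewrite mul1n. Qed.

Lemma keyL nn a N : (a <= N)%N -> (a.*2 <= nn)%N -> eqm a.+1 (qf N * qbin nn a) 1.
Proof.
move=> haN ha.
have -> : qf N * qbin nn a = (qbin nn a * qf a) *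
   \prod_(a <= i < N) (1 - 'X^(i.+1)).
  by rewrite /qf (@big_cat_nat _ _ _ a 0 N _ _ (leq0n _) haN) /= mulrC mulrA.
rewrite qbin_prod -[X in eqm _ _ X]mulr1; apply: eqm_mul.
  rewrite /R big_nat_cond; apply: eqm_prod1 => i /andP [/andP [_ hi] _].
  move: ha; rewrite -addnn; lia.
rewrite big_nat_cond; apply: eqm_prod1 => i /andP [/andP [hi _] _]; lia.
Qed.

Definition W (N : nat) : {poly rat} := \sum_(0 <= j < N.*2.+1) 'X^(e N j).

Lemma step_a M N : (M.*2 <= N)%N ->
  eqm M (qf N * qf N * Ssum N) (qf N * W N).
Proof.
move=> hN; rewrite /Ssum /W !mulr_sumr big_nat_cond [X in eqm _ _ X]big_nat_cond.
apply: eqm_sum => j /andP [/andP [_ hj] _].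
rewrite /c mulrA [_ * 'X^_]mulrC -mulrA [qf N * 'X^_]mulrC.
case: (leqP M (e N j)) => he.
  apply: eqm_trans (eqm_Xn0 _ he) _; apply: eqm_sym; exact: eqm_Xn0.
rewrite -[X in eqm _ _ ('X^_ * X)]mulr1; apply: eqm_Xn.
rewrite -mulrA; apply: eqm_mul => //.
case: (leqP N j) => hNj.
  have hsym := qbin_sym (n := N.*2) (a := j); rewrite hsym; last by lia.
  have ee : (e N j = tri (j - N))%N by rewrite /e hNj.
  have := tri_ge (j - N); rewrite -ee => ht.
  apply: (eqm_le (M := (N.*2 - j).+1)); last (apply: keyL; rewrite -!addnn in hN hj *; lia).
  rewrite -!addnn in hN hj *; lia.
have ee : (e N j = tri (N - j.+1))%N by rewrite /e leqNgt hNj.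
have := tri_ge (N - j.+1); rewrite -ee => ht.
apply: (eqm_le (M := j.+1)); last (apply: keyL; rewrite -!addnn in hN hj *; lia).
rewrite -!addnn in hN hj *; lia.
Qed.

Lemma W_psi N : W N = psi N + psi N.+1.
Proof.
rewrite /W (@big_cat_nat _ _ _ N 0 N.*2.+1 _ _ (leq0n _)) /=; last by rewrite -addnn; lia.
congr (_ + _).
  rewrite big_nat_rev /psi add0n big_nat_cond [in RHS]big_nat_cond.
  apply: eq_bigr => i /andP [/andP [_ hi] _].
  rewrite /e; have -> : (N <= N - i.+1)%N = false by lia.
  by have -> : (N - (N - i.+1).+1 = i)%N by lia.
rewrite -{1}[N]add0n big_addn /psi.
have -> : (N.*2.+1 - N = N.+1)%N by rewrite -addnn; lia.
rewrite big_nat_cond [in RHS]big_nat_cond.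
apply: eq_bigr => i /andP [/andP [_ hi] _].
by rewrite /e leq_addl addnK.
Qed.

Lemma step_c N : qf N.+1 * qf N.+1 * Ssum N.+1 =
  2%:R * pp 2 N.+1 * pp 2 N * (1 - 'X^(N.+1)).
Proof.
elim: N => [|N IH].
  rewrite S_closed /qf /pp !big_nat1 big_geq //.
  have -> : ('X^(2 * 1) = 'X * 'X :> {poly rat}) by rewrite -expr2.
  rewrite expr0 expr1; ring.
rewrite S_rec qf_S.
have e1 : pp 2 N.+2 = pp 2 N.+1 * (1 - 'X^(N.+2) * 'X^(N.+2)).
  by rewrite /pp big_nat_recr //= -exprD addnn -mul2n.
have e2 : pp 2 N.+1 = pp 2 N * (1 - 'X^(N.+1) * 'X^(N.+1)).
  by rewrite /pp big_nat_recr //= -exprD addnn -mul2n.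
have IH' : qf N.+1 * qf N.+1 * Ssum N.+1 =
  2%:R * (pp 2 N * (1 - 'X^(N.+1) * 'X^(N.+1))) * pp 2 N * (1 - 'X^(N.+1)).
  by rewrite IH e2.
rewrite e1 e2.
transitivity (qf N.+1 * qf N.+1 * Ssum N.+1 * ((1 - 'X^(N.+2)) * (1 - 'X^(N.+2)) *
   ((1 + 'X^(N.+1)) * (1 + 'X^(N.+2))))); first by ring.
rewrite IH'; ring.
Qed.

Lemma gauss_fin n : (qf (n.+1).*2 * psi (n.+1).*2)`_n =
  (pp 2 (n.+1).*2 * pp 2 (n.+1).*2)`_n.
Proof.
set N := (n.+1).*2; set M := n.+1.
have hN : N = (n.*2.+1).+1 by rewrite /N doubleS.
have hMN : (M.*2 <= N)%N by [].
have hMN' : (M <= n.*2.+1)%N by rewrite -addnn; lia.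
have E1 := eqm_sym (step_a hMN).
rewrite hN step_c -hN in E1.
have E2 : eqm M (2%:R * pp 2 N * pp 2 n.*2.+1 * (1 - 'X^N)) (2%:R * pp 2 N * pp 2 N * 1).
  apply: eqm_mul; last by apply: eqm_1X; rewrite /N /M -addnn; lia.
  apply: eqm_mul => //; apply: eqm_le hMN' _; apply: pp_stable => //.
have E3 : eqm M (qf N * W N) (qf N * (psi N + psi N)).
  have hpsi : psi N.+1 = psi N + 'X^(tri N) by rewrite /psi big_nat_recr.
  rewrite W_psi hpsi addrA mulrDr.
  rewrite -[X in eqm _ _ X]addr0; apply: eqm_add => //.
  rewrite -[X in eqm _ _ X](mulr0 (qf N)); apply: eqm_mul => //.
  rewrite -[X in eqm _ X _]mulr1; apply: eqm_Xn0.
  have ht := tri_ge N; apply: leq_trans ht; rewrite /N /M -addnn; lia.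
have E := eqm_trans (eqm_trans (eqm_sym E3) E1) E2.
have := E n (ltnSn n).
rewrite mulr1 -mulrA mulrDr coefD mulr_natl coefMn mulr2n.
set a := (qf N * psi N)`_n; set b := (pp 2 N * pp 2 N)`_n.
move=> h; apply: (@mulfI _ 2%:R); first by [].
by rewrite !mulr_natl !mulr2n h.
Qed.

Definition Tf : fps := fun i => (psi i.+1)`_i.

Lemma fa_qpoch m n N : (0 < m)%N -> (n < N)%N -> fa n (qpoch_inf m) (pp m N).
Proof.
move=> hm hn i hi; rewrite /qpoch_inf -/(pp m i.+1).
by apply: (pp_stable (K := i.+1) (K' := N)) => //; lia.
Qed.

Lemma fa_Tf n N : (n < N)%N -> fa n Tf (psi N).
Proof.
move=> hn i hi; rewrite /Tf; apply: (psi_stable (K := i.+1) (K' := N)) => //; lia.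
Qed.

Lemma gauss_fps : fps_mul (qpoch_inf 1) Tf = fps_mul (qpoch_inf 2) (qpoch_inf 2).
Proof.
apply: funext => n; set N := (n.+1).*2.
have hn : (n < N)%N by rewrite /N -addnn; lia.
rewrite (@fa_mul n _ _ _ _ (fa_qpoch (isT : (0 < 1)%N) hn) (fa_Tf hn) n (leqnn n)).
rewrite (@fa_mul n _ _ _ _ (fa_qpoch (isT : (0 < 2)%N) hn) (fa_qpoch (isT : (0 < 2)%N) hn) n (leqnn n)).
by rewrite qf_pp gauss_fin.
Qed.

Lemma path_head x s : path geq x s -> (head 0 s <= x)%N.
Proof. by case: s => //= y t /andP []. Qed.

Lemma hlt_aux x s : path geq x s -> (0 < x)%N -> x \notin s ->
  (size (undup s) <= head 0 s)%N -> (size (undup s) < x)%N.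
Proof.
case: s => [|y t] /=; first lia.
move=> /andP [hyx _] hx; rewrite inE negb_or => /andP [hxy _] h; lia.
Qed.

Lemma part_bound (s : seq nat) : sorted geq s -> all (fun x => 0 < x)%N s ->
  (size (undup s) <= head 0 s)%N /\ (tri (size (undup s)) <= sumn s)%N.
Proof.
elim: s => [|x s IH] //= hs /andP [hx hall].
have hs' : sorted geq s := path_sorted hs.
have hhead := path_head hs.
have [IH1 IH2] := IH hs' hall.
case: ifP => hin /=.
  by split; [exact: leq_trans IH1 hhead | exact: leq_trans IH2 (leq_addl _ _)].
have hlt := hlt_aux hs hx (negbT hin) IH1.
set u := size (undup s) in IH1 IH2 hlt *; split; lia.
Qed.

Lemma attained_tri n k : attained n k -> (tri k <= n)%N.
Proof.
move=> /asboolP [s [/and3P [hs hall /eqP hsum] <-]].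
by have [_ h] := part_bound hs hall; rewrite -hsum.
Qed.

Fixpoint stair (m : nat) : seq nat := if m is m'.+1 then m :: stair m' else [::].

Lemma stair_props m : [/\ sumn (stair m) = tri m, size (stair m) = m,
  all (fun x => 0 < x <= m)%N (stair m), sorted geq (stair m) & uniq (stair m)].
Proof.
elim: m => [|m [h1 h2 h3 h4 h5]] //=.
split.
- by rewrite h1 addnC.
- by rewrite h2.
- rewrite leqnn /=; apply/allP => x hx; move/allP: h3 => /(_ x hx); lia.
- by case: m {h1 h2 h3 h5} h4 => //= m ->; rewrite andbT.
- rewrite h5 andbT; apply/negP => hin; move/allP: h3 => /(_ _ hin); lia.
Qed.

Lemma tri_attained n k : (0 < k)%N -> (tri k <= n)%N -> attained n k.
Proof.
case: k => // k _ hk; apply/asboolP.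
have [h1 h2 h3 h4 h5] := stair_props k.
exists ((n - tri k.+1 + k.+1)%N :: stair k); split.
  apply/and3P; split.
  - rewrite /=; case: k {h1 h2 h3 h5 hk} h4 => //= k ->; rewrite andbT; lia.
  - rewrite /=; apply/andP; split; first lia.
    by apply/allP => x hx; move/allP: h3 => /(_ x hx) /andP [].
  - by rewrite /= h1; apply/eqP; simpl in hk; lia.
rewrite /alpha1 undup_id /=; first by rewrite h2.
rewrite h5 andbT; apply/negP => hin; move/allP: h3 => /(_ _ hin); simpl in hk; lia.
Qed.

Lemma b_spec n : (tri (b n) <= n)%N /\ (forall k, (tri k <= n)%N -> (k <= b n)%N).
Proof.
rewrite /b; case: ex_maxnP => m hm hmax; split; first exact: attained_tri.
move=> k hk; case: k hk => // k hk; apply: hmax; exact: tri_attained.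
Qed.

Lemma tri_strict d d' : (d < d')%N -> (tri d < tri d')%N.
Proof.
elim: d' => // d' IH; rewrite ltnS leq_eqVlt => /orP [/eqP ->|h] /=; first lia.
have := IH h; lia.
Qed.

Lemma tri_inj d d' : tri d = tri d' -> d = d'.
Proof.
move=> e; case: (ltngtP d d') => // h.
  by have := tri_strict h; rewrite e ltnn.
by have := tri_strict h; rewrite e ltnn.
Qed.

Lemma sum_ind L v : \sum_(0 <= d < L) ((d == v)%:R : rat) = (v < L)%N%:R.
Proof.
elim: L => [|L IH]; first by rewrite big_geq.
rewrite big_nat_recr //= IH -natrD ltnS; congr (_%:R).
by case: ltngtP => h //=.
Qed.

Lemma Tf_eq n : Tf n = \sum_(0 <= d < n.+1) ((n == tri d)%:R : rat).
Proof. by rewrite /Tf /psi coef_sum; apply: eq_bigr => d _; rewrite coefXn. Qed.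

Lemma b0 : b 0 = 0%N.
Proof. by have [h _] := b_spec 0; have := tri_ge (b 0); lia. Qed.

Lemma bS n : ((b n.+1)%:R : rat) = (b n)%:R + Tf n.+1.
Proof.
have [hu1 hu2] := b_spec n; have [hv1 hv2] := b_spec n.+1.
set u := b n in hu1 hu2 *; set v := b n.+1 in hv1 hv2 *.
have huv : (u <= v)%N by apply: hv2; lia.
rewrite Tf_eq.
case: (leqP (tri v) n) => hv.
  have hvu : (v <= u)%N by apply: hu2.
  have -> : v = u by apply/eqP; rewrite eqn_leq hvu huv.
  rewrite big1 ?addr0 // => d _; case: eqP => // e.
  have hd : (d <= v)%N by apply: hv2; lia.
  have := tri_mono hd; lia.
have ev : tri v = n.+1 by lia.
have hvL : (v < n.+2)%N by have := tri_ge v; lia.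
rewrite (eq_bigr (fun d => ((d == v)%:R : rat))); last first.
  move=> d _; have -> // : (n.+1 == tri d) = (d == v).
  apply/eqP/eqP => [e|->]; last by rewrite ev.
  by apply: tri_inj; rewrite -e ev.
rewrite sum_ind hvL.
case: v hv1 hv2 huv ev hvL {hv} => [|k] hv1 hv2 huv ev hvL; first by [].
have hk : (k <= u)%N by apply: hu2; simpl in ev; lia.
have -> : u = k.
  suff: u != k.+1 by lia.
  by apply/eqP => e; move: hu1; rewrite e ev ltnn.
by rewrite -natr1.
Qed.

Definition Bf : fps := fun n => (b n)%:R.

Lemma mulB : fps_mul (fps_of_poly (1 - 'X)) Bf = fps_sub Tf fps_one.
Proof.
apply: funext => -[|n].
  rewrite /fps_mul big_ord1 /fps_of_poly /Bf /fps_sub /fps_one b0 mulr0.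
  by rewrite Tf_eq big_nat1 /= subrr.
rewrite /fps_mul big_ord_recl big_ord_recl big1; last first.
  by move=> i _; rewrite /fps_of_poly coefB coef1 coefX /= subrr mul0r.
rewrite /fps_of_poly !coefB !coef1 !coefX /= /fps_sub /fps_one /Bf subr0 subn1 /=.
by rewrite bS; rewrite !(subr0, mul1r, sub0r, addr0) mulN1r addrAC subrr add0r.
Qed.

Theorem mainTheorem2 :
  (fun n : nat => ((b n)%:R : rat)) =
  fps_mul (fps_inv (fps_of_poly (1 - 'X)))
          (fps_sub (fps_mul (fps_mul (qpoch_inf 2) (qpoch_inf 2))
                            (fps_inv (qpoch_inf 1)))
                   fps_one).
Proof.
have hQ1 : qpoch_inf 1 0%N != 0.
  by rewrite /qpoch_inf big_nat1 coefB coef1 coefXn.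
have hX : fps_of_poly (1 - 'X) 0%N != 0.
  by rewrite /fps_of_poly coefB coef1 coefX.
rewrite -gauss_fps (fps_mulC (qpoch_inf 1)) -fps_mulA fps_mulV // fps_mul1.
exact: (fps_inv_uniq _ _ _ hX mulB).
Qed.
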